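(* Let $X\times G\to X$ be a continuous right action of a locally compact Hausdorff group on a Hausdorff space, and let $F\subseteq X$ be a closed paracompact subset such that the action is $F$-proper. Then $FG\subseteq X$ is closed and paracompact.
   Context: For $A,B\subseteq X$ set $\langle A:B\rangle:=\{g\in G: Bg\cap A\neq\emptyset\}$ and write $A\perp B$ if it is relatively compact in $G$. For closed $F$, the action is $F$-proper if for every $x\in X$ there are neighborhoods $V_x\ni x$ and $V_F\supseteq F$ with $V_F\perp V_x$. *)

(* Defs.v *)
From HB Require Import structures.
From mathcomp Require Import all_boot all_order all_algebra.
From mathcomp Require Import all_classical all_reals all_analysis.
Set Implicit Arguments. Unset Strict Implicit. Unset Printing Implicit Defensive.
Local Open Scope classical_set_scope.

Definition topological_group (G : topologicalType)
    (mul : G -> G -> G) (inv : G -> G) (e : G) : Prop :=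
  [/\ (forall a b c, mul a (mul b c) = mul (mul a b) c),
      (forall a, mul e a = a /\ mul a e = a),
      (forall a, mul (inv a) a = e /\ mul a (inv a) = e),
      continuous (fun p : G * G => mul p.1 p.2) &
      continuous inv].

Definition continuous_right_action (X G : topologicalType)
    (mul : G -> G -> G) (e : G) (act : X -> G -> X) : Prop :=
  [/\ (forall x, act x e = x),
      (forall x g h, act (act x g) h = act x (mul g h)) &
      continuous (fun p : X * G => act p.1 p.2)].

Definition transporter (X G : Type) (act : X -> G -> X) (A B : set X) : set G :=
  [set g | exists x, B x /\ A (act x g)].

Definition perp (X G : topologicalType) (act : X -> G -> X) (A B : set X) :=
  precompact (transporter act A B).

Definition set_nbhs (X : topologicalType) (F V : set X) :=
  exists O, [/\ open O, F `<=` O & O `<=` V].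

Definition F_proper (X G : topologicalType) (act : X -> G -> X) (F : set X) :=
  forall x : X, exists Vx VF,
    [/\ nbhs x Vx, set_nbhs F VF & perp act VF Vx].

(* A subset A of X is paracompact (in the subspace topology): every cover of
   A by open sets of X (equivalently, every cover by relatively open sets) has
   a refinement by relatively open subsets of A that covers A and is locally
   finite in A. *)
Definition paracompact_set (X : topologicalType) (A : set X) : Prop :=
  forall U : set (set X), (forall u, U u -> open u) -> A `<=` \bigcup_(u in U) u ->
  exists V : set (set X),
    [/\ (forall v, V v -> exists w, open w /\ v = A `&` w),
        A `<=` \bigcup_(v in V) v,
        (forall v, V v -> exists u, U u /\ v `<=` u) &
        (forall x, A x -> exists w, [/\ open w, w x &
             finite_set [set v | V v /\ v `&` w !=set0]])].

Definition saturation (X G : Type) (act : X -> G -> X) (F : set X) : set X :=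
  [set y | exists x g, F x /\ y = act x g].

(* Main.v *)
Require Import Defs.
From HB Require Import structures.
From mathcomp Require Import all_boot all_order all_algebra.
From mathcomp Require Import all_classical all_reals all_analysis.
Set Implicit Arguments. Unset Strict Implicit. Unset Printing Implicit Defensive.
Local Open Scope classical_set_scope.

Lemma near_fin (T : topologicalType) (x : T) (A : Type) (Phi : set A)
  (P : A -> T -> Prop) : finite_set Phi -> (forall a, Phi a -> nbhs x (P a)) ->
  nbhs x (fun z => forall a, Phi a -> P a z).
Proof.
elim/Pchoice: A => A in Phi P *.
move=> /finite_seqP [s ->]; elim: s => [|a s IH] H.
  by apply: filterS filterT => z _ b.
have H1 : nbhs x (P a) by apply: H; rewrite /= in_cons eqxx.
have H2 : nbhs x (fun z => forall b, [set` s] b -> P b z).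
  by apply: IH => b sb; apply: H; rewrite /= in_cons sb orbT.
apply: filterS (filterI H1 H2) => z [Pz Qz] b /=; rewrite in_cons.
by case/orP => [/eqP -> //|sb]; apply: Qz.
Qed.

Lemma fsc (T : topologicalType) (K : set T) (A : Type) (D : set A) (f : A -> set T) :
  compact K -> (forall k, K k -> exists2 d, D d & nbhs k (f d)) ->
  exists D0 : set A, [/\ finite_set D0, D0 `<=` D & K `<=` \bigcup_(d in D0) f d].
Proof.
move=> cK Hc.
pose Fl : set_system (set A) := [set Q | exists D0, [/\ finite_set D0, D0 `<=` D &
   forall E, D0 `<=` E -> Q E]].
have FF : Filter Fl.
  split.
  - by exists set0; split => //; exact: finite_set0.
  - move=> Q1 Q2 [D1 [f1 s1 h1]] [D2 [f2 s2 h2]]; exists (D1 `|` D2); split.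
    + by rewrite finite_setU.
    + by move=> a [/s1|/s2].
    + by move=> E sE; split; [apply: h1 | apply: h2]; move=> a ?; apply: sE; [left|right].
  - by move=> Q1 Q2 s [D1 [f1 s1 h1]]; exists D1; split => // E /h1 /s.
have /compact_near_coveringP cov := cK.
have [] := cov (set A) Fl (fun E k => exists2 d, (E `&` D) d & f d k) FF.
  move=> k Kk; have [d Dd nd] := Hc k Kk.
  exists (f d, [set E | E d]); first split => //.
    by exists [set d]; split; [exact: finite_set1| by move=> a ->| by move=> E sE; apply: sE].
  by move=> [x' E] /= [fx' Ed]; exists d.
move=> D0 [f0 s0 /(_ D0 (fun a h => h)) HK].
exists (D0 `&` D); split.
- exact: finite_setIl.
- by move=> a [].
- by move=> k /HK [d Dd fdk]; exists d.
Qed.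

Definition meets (T : Type) (S : set (set T)) (w : set T) :=
  [set c | S c /\ c `&` w !=set0].

Lemma meetsS (T : Type) (S : set (set T)) (w w' : set T) :
  w `<=` w' -> meets S w `<=` meets S w'.
Proof. by move=> sw c [Sc [z [cz wz]]]; split => //; exists z; split => //; apply: sw. Qed.

Lemma lfk (T : topologicalType) (C : set (set T)) (K : set T) : compact K ->
  (forall k, K k -> exists w, nbhs k w /\ finite_set (meets C w)) ->
  exists Phi, finite_set Phi /\
    (forall k, K k -> exists w, nbhs k w /\ meets C w `<=` Phi).
Proof.
move=> cK H.
have Hc : forall k, K k -> exists2 w, [set w | open w /\ finite_set (meets C w)] w & nbhs k (id w).
  move=> k /H [w [nw fw]]; exists (interior w); last exact: nbhs_interior.
  split; first exact: open_interior.
  by apply: sub_finite_set fw; apply: meetsS; apply: interior_subset.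
have [D0 [fD0 sD0 cD0]] := fsc cK Hc.
exists (\bigcup_(w in D0) meets C w); split.
  by apply: bigcup_finite => // w /sD0 [].
move=> k /cD0 [w D0w wk]; exists w; split.
  by apply: open_nbhs_nbhs; split => //; have [] := sD0 _ D0w.
by move=> c mc; exists w.
Qed.

Lemma lfk_meets (T : topologicalType) (C : set (set T)) (K : set T) Phi :
  (forall k, K k -> exists w, nbhs k w /\ meets C w `<=` Phi) ->
  meets C K `<=` Phi.
Proof.
move=> H c [Cc [k [ck Kk]]]; have [w [nw sw]] := H k Kk.
by apply: sw; split => //; exists k; split => //; apply: nbhs_singleton.
Qed.

Lemma closed_sub_closure (T : topologicalType) (F A : set T) :
  closed F -> A `<=` F -> closure A `<=` F.
Proof. by move=> cF AF; rewrite (closure_id F).1 //; exact: closureS. Qed.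

Lemma reg (T : topologicalType) (F : set T) : hausdorff_space T -> closed F ->
  paracompact_set F -> forall x n, F x -> open n -> n x ->
  exists n', [/\ open n', n' x & closure (F `&` n') `<=` n].
Proof.
move=> hT cF PF x n Fx on nx.
pose U0 := [set u : set T | u = n \/ (open u /\ exists P, [/\ open P, P x &
   forall z, P z -> ~ u z])].
have oU0 : forall u, U0 u -> open u by move=> u [->|[]].
have cU0 : F `<=` \bigcup_(u in U0) u.
  move=> f Ff; have [nf|nnf] := pselect (n f); first by exists n => //; left.
  have xf : x != f by apply/eqP => xf; apply: nnf; rewrite -xf.
  move: hT; rewrite open_hausdorff => /(_ _ _ xf) [[A B] [xA fB] [oA oB /eqP AB0]].
  exists B; last by rewrite -inE.
  rewrite /U0 /=; right; split => //; exists A; split => //; first by rewrite -inE.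
  by move=> z Az Bz; have : (A `&` B) z by []; rewrite AB0.
have [V [rV cV fV lV]] := PF U0 oU0 cU0.
have [w [ow wx finw]] := lV x Fx.
pose W := fun z => w z /\ forall v, meets V w v -> (v `<=` n \/ ~ v z).
have nW : nbhs x W.
  apply: filterI; first by apply: open_nbhs_nbhs.
  apply: near_fin => // v [Vv _].
  have [vn|nvn] := pselect (v `<=` n); first by apply: filterS filterT => z _; left.
  have [u [U0u vu]] := fV v Vv.
  case: U0u => [un|[ou [P [oP Px Pu]]]]; first by exfalso; apply: nvn; rewrite -un.
  apply: filterS (open_nbhs_nbhs (conj oP Px)) => z Pz; right => vz.
  exact: (Pu z Pz (vu z vz)).
exists (interior W); split => //; first exact: open_interior.
move=> y cly; apply: contrapT => ny.
have Fy : F y by apply: (closed_sub_closure cF _ cly) => z [].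
have [v Vv vy] := cV y Fy.
have [wv [owv vE]] := rV v Vv.
have wvy : wv y by move: vy; rewrite vE => -[].
have [z [[Fz Wz] wvz]] := cly wv (open_nbhs_nbhs (conj owv wvy)).
have [wz Hz] := interior_subset Wz.
have vz : v z by rewrite vE.
case: (Hz v).
- by split => //; exists z.
- by move=> vn; apply: ny; apply: vn.
- by [].
Qed.

Lemma pfc (T : topologicalType) (F : set T) : hausdorff_space T -> closed F ->
  paracompact_set F -> forall N : set (set T), (forall n, N n -> open n) ->
  F `<=` \bigcup_(n in N) n ->
  exists C : set (set T), [/\ (forall c, C c -> closed c /\ c `<=` F),
    F `<=` \bigcup_(c in C) c, (forall c, C c -> exists2 n, N n & c `<=` n) &
    (forall x, F x -> exists w, nbhs x w /\ finite_set (meets C w))].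
Proof.
move=> hT cF PF N oN cN.
pose N' := [set n' : set T | open n' /\ exists2 n, N n & closure (F `&` n') `<=` n].
have oN' : forall n, N' n -> open n by move=> n [].
have cN' : F `<=` \bigcup_(n in N') n.
  move=> x Fx; have [n Nn nx] := cN x Fx.
  have [n' [on' n'x cln']] := reg hT cF PF Fx (oN n Nn) nx.
  by exists n' => //; split => //; exists n.
have [V [rV cV fV lV]] := PF N' oN' cN'.
have VF : forall v, V v -> v `<=` F by move=> v /rV [w [_ ->]] z [].
exists (closure @` V); split.
- move=> _ [v Vv <-]; split; first exact: closed_closure.
  exact: closed_sub_closure (VF v Vv).
- by move=> x /cV [v Vv vx]; exists (closure v); [exists v | exact: subset_closure].
- move=> _ [v Vv <-]; have [u [[ou [n Nn cln]] vu]] := fV v Vv.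
  exists n => //; apply: subset_trans cln; apply: closureS => z vz; split.
  + exact: VF vz.
  + exact: vu.
- move=> x Fx; have [w [ow wx finw]] := lV x Fx; exists w; split.
    exact: open_nbhs_nbhs.
  apply: sub_finite_set (finite_image closure finw).
  move=> _ [[v Vv <-] [z [clz wz]]]; exists v => //; split => //.
  have [z' [vz' wz']] := clz w (open_nbhs_nbhs (conj ow wz)).
  by exists z'.
Qed.

Section Act.
Variables (X G : topologicalType) (mul : G -> G -> G) (inv : G -> G) (e : G)
  (act : X -> G -> X) (F : set X).
Hypotheses (TG : topological_group mul inv e)
  (CA : continuous_right_action mul e act) (HX : hausdorff_space X)
  (HG : hausdorff_space G) (LC : locally_compact [set: G]) (cF : closed F)
  (FP : F_proper act F).

Lemma mulA a b c : mul a (mul b c) = mul (mul a b) c.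
Proof. by case: TG. Qed.
Lemma mul1g a : mul e a = a.
Proof. by case: TG => _ H _ _ _; case: (H a). Qed.
Lemma mulg1 a : mul a e = a.
Proof. by case: TG => _ H _ _ _; case: (H a). Qed.
Lemma mulVg a : mul (inv a) a = e.
Proof. by case: TG => _ _ H _ _; case: (H a). Qed.
Lemma mulgV a : mul a (inv a) = e.
Proof. by case: TG => _ _ H _ _; case: (H a). Qed.
Lemma mul_cont : continuous (fun p : G * G => mul p.1 p.2).
Proof. by case: TG. Qed.
Lemma inv_cont : continuous inv.
Proof. by case: TG. Qed.
Lemma inv_uniq a b : mul a b = e -> a = inv b.
Proof.
move=> H; rewrite -[a]mulg1 -(mulgV b) mulA H mul1g //.
Qed.
Lemma inv_e : inv e = e.
Proof. by rewrite -[inv e]mulg1 mulVg. Qed.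
Lemma invK a : inv (inv a) = a.
Proof. by apply/esym/inv_uniq; rewrite mulgV. Qed.
Lemma invM a b : inv (mul a b) = mul (inv b) (inv a).
Proof.
apply/esym/inv_uniq; rewrite -mulA [mul (inv a) _]mulA mulVg mul1g mulVg //.
Qed.
Lemma mulKg a b : mul (inv a) (mul a b) = b.
Proof. by rewrite mulA mulVg mul1g. Qed.
Lemma mulKVg a b : mul a (mul (inv a) b) = b.
Proof. by rewrite mulA mulgV mul1g. Qed.

Lemma act_e x : act x e = x.
Proof. by case: CA. Qed.
Lemma act_mul x g h : act (act x g) h = act x (mul g h).
Proof. by case: CA. Qed.
Lemma act_cont : continuous (fun p : X * G => act p.1 p.2).
Proof. by case: CA. Qed.
Lemma actK x g : act (act x g) (inv g) = x.
Proof. by rewrite act_mul mulgV act_e. Qed.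
Lemma actVK x g : act (act x (inv g)) g = x.
Proof. by rewrite act_mul mulVg act_e. Qed.

Lemma act_near x g (A : set X) : nbhs (act x g) A ->
  exists P Q, [/\ nbhs x P, nbhs g Q & forall z h, P z -> Q h -> A (act z h)].
Proof.
move=> /(@act_cont (x, g)) [[P Q] /= [Px Qg] sPQ].
by exists P, Q; split => // z h Pz Qh; apply: (sPQ (z, h)).
Qed.

Lemma mul_near a b (A : set G) : nbhs (mul a b) A ->
  exists P Q, [/\ nbhs a P, nbhs b Q & forall z h, P z -> Q h -> A (mul z h)].
Proof.
move=> /(@mul_cont (a, b)) [[P Q] /= [Px Qg] sPQ].
by exists P, Q; split => // z h Pz Qh; apply: (sPQ (z, h)).
Qed.

Lemma inv_near a (A : set G) : nbhs (inv a) A -> nbhs a (inv @^-1` A).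
Proof. by move=> /(@inv_cont a). Qed.

Lemma actl_cont y : continuous (act y).
Proof.
move=> g A /act_near [P [Q [Py Qg H]]]; apply: filterS Qg => h Qh.
exact: H _ _ (nbhs_singleton Py) Qh.
Qed.

Lemma mull_cont a : continuous (mul a).
Proof.
move=> g A /mul_near [P [Q [Py Qg H]]]; apply: filterS Qg => h Qh.
exact: H _ _ (nbhs_singleton Py) Qh.
Qed.

Definition img (a : set X) (L : set G) :=
  [set z | exists x g, [/\ a x, L g & z = act x g]].

Lemma img_closed a L : a `<=` F -> closed a -> closed L -> closed (img a L).
Proof.
move=> aF ca cL y cly; apply: contrapT => ny.
have [W0 [VF [nW0 [Op [oO FO OV]] [K TK [cK clK]]]]] := FP y.
have /compact_near_coveringP cov := cK.
have H : \forall z \near y, K `<=` (fun k => ~ (a (act z k) /\ L (inv k))).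
  apply: (cov X (nbhs y) (fun z k => ~ (a (act z k) /\ L (inv k)))) => k Kk.
  have [ayk|nayk] := pselect (a (act y k)).
    have nL : ~ L (inv k).
      by move=> Lk; apply: ny; exists (act y k), (inv k); split => //; rewrite actK.
    have : nbhs k (inv @^-1` (~` L)).
      apply: inv_near; apply: open_nbhs_nbhs; split => //; exact: closed_openC.
    move=> nk; exists (inv @^-1` (~` L), setT); first by split => //; exact: filterT.
    by move=> [k' z] /= [nLk' _] [].
  have : nbhs (act y k) (~` a).
    by apply: open_nbhs_nbhs; split => //; exact: closed_openC.
  move=> /act_near [P [Q [Py Qk HPQ]]].
  exists (Q, P); first by split.
  by move=> [k' z] /= [Qk' Pz] [azk _]; apply: (HPQ z k' Pz Qk').
have [z [[x [g [ax Lg ->]]] [W0z Hz]]] := cly _ (filterI nW0 H).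
have Kg : K (inv g) by apply: TK; exists (act x g); split => //; rewrite actK; exact/OV/FO/aF.
by apply: (Hz _ Kg); rewrite actK invK.
Qed.


Section GCov.

Definition cpt_nbhs_e : {C : set G | [/\ nbhs e C, compact C & closed C]}.
Proof.
apply: cid; have [C wC [cC clC]] := LC (I : [set: G] e).
by exists C; split => //; move: wC; rewrite withinET.
Qed.

Let C := sval cpt_nbhs_e.
Lemma nC : nbhs e C. Proof. by case: (svalP cpt_nbhs_e). Qed.
Lemma cC : compact C. Proof. by case: (svalP cpt_nbhs_e). Qed.
Lemma clC : closed C. Proof. by case: (svalP cpt_nbhs_e). Qed.

Let Vs := C `&` (inv @` C).
Lemma cinvC : compact (inv @` C).
Proof. apply: continuous_compact cC; apply: continuous_subspaceT; exact: inv_cont. Qed.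
Lemma nVs : nbhs e Vs.
Proof.
apply: filterI nC _; have : nbhs e (inv @^-1` C) by apply: inv_near; rewrite inv_e; exact: nC.
by apply: filterS => z Cz; exists (inv z) => //; rewrite invK.
Qed.
Lemma clVs : closed Vs.
Proof. by apply: closedI clC _; exact: (compact_closed HG cinvC). Qed.
Lemma cVs : compact Vs.
Proof. by apply: subclosed_compact clVs cC _ => z []. Qed.
Lemma Vs_inv g : Vs g -> Vs (inv g).
Proof. by case=> Cg [c Cc cg]; split; [rewrite -cg invK | exists g]. Qed.
Lemma Vs_e : Vs e.
Proof. exact: nbhs_singleton nVs. Qed.

Fixpoint pw n : set G := if n is n'.+1 then
  (fun p : G * G => mul p.1 p.2) @` (pw n' `*` Vs) else [set e].

Lemma pw_compact n : compact (pw n).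
Proof.
elim: n => [|n IH] /=; first exact: compact_set1.
apply: continuous_compact; last exact: compact_setX IH cVs.
apply: continuous_subspaceT; exact: mul_cont.
Qed.

Lemma pwS n a : pw n a -> pw n.+1 a.
Proof. by move=> pa; exists (a, e); [split => //; exact: Vs_e | rewrite /= mulg1]. Qed.

Lemma pw_le m n a : (m <= n)%N -> pw m a -> pw n a.
Proof.
elim: n => [|n IH] mn pa; first by move: mn; rewrite leqn0 => /eqP mn; rewrite -mn.
move: mn; rewrite leq_eqVlt => /orP [/eqP <- //|]; rewrite ltnS => mn.
by apply: pwS; exact: IH.
Qed.

Lemma pw_mul m n a b : pw m a -> pw n b -> pw (m + n) (mul a b).
Proof.
elim: n b => [|n IH] b pa /=; first by move=> ->; rewrite mulg1 addn0.
move=> [[b' v] /= [pb' Vv] <-]; rewrite addnS; exists (mul a b', v) => //=.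
  by split => //; exact: IH.
by rewrite mulA.
Qed.

Lemma pw1 v : Vs v -> pw 1 v.
Proof. by move=> Vv; exists (e, v) => //=; rewrite mul1g. Qed.

Lemma pw_inv n a : pw n a -> pw n (inv a).
Proof.
elim: n a => [|n IH] a /=; first by move=> ->; rewrite inv_e.
move=> [[a' v] /= [pa' Vv] <-]; rewrite invM.
by have := pw_mul (pw1 (Vs_inv Vv)) (IH _ pa'); rewrite add1n.
Qed.

Let Vo := interior Vs.
Lemma Vo_e : Vo e. Proof. exact: nVs. Qed.

Definition Bo n := [set z | exists a b, [/\ pw n a, Vo b & z = mul a b]].

Lemma Bo_open n : open (Bo n).
Proof.
rewrite openE => z [a [b [pa Vob ->]]].
have Hn : nbhs (mul (inv a) (mul a b)) Vo by rewrite mulKg; apply: nbhs_interior.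
have H : nbhs (mul a b) (mul (inv a) @^-1` Vo) := @mull_cont (inv a) (mul a b) _ Hn.
rewrite /interior; apply: filterS H => z' /= Vz'.
by exists a, (mul (inv a) z'); split => //; rewrite mulKVg.
Qed.

Lemma pw_Bo n : pw n `<=` Bo n.
Proof. by move=> a pa; exists a, e; split => //; [exact: Vo_e | rewrite mulg1]. Qed.

Lemma Bo_pw n : Bo n `<=` pw n.+1.
Proof. by move=> _ [a [b [pa Vob ->]]]; exists (a, b) => //; split => //; exact: interior_subset. Qed.

Lemma Bo_le m n : (m <= n)%N -> Bo m `<=` Bo n.
Proof. by move=> mn _ [a [b [pa Vob ->]]]; exists a, b; split => //; exact: pw_le pa. Qed.

Definition Rg n := if n is n'.+1 then pw n'.+2 `\` Bo n' else pw 1.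

Lemma Rg_closed n : closed (Rg n).
Proof.
case: n => [|n]; first exact: (compact_closed HG (@pw_compact 1)).
change (closed (pw n.+2 `&` ~` Bo n)); apply: closedI; first exact: (compact_closed HG (@pw_compact _)).
exact: open_closedC (@Bo_open n).
Qed.

Lemma Rg_pw n : Rg n `<=` pw n.+1.
Proof. by case: n => [|n] //= a []. Qed.

Lemma Rg_compact n : compact (Rg n).
Proof. exact: subclosed_compact (@Rg_closed n) (@pw_compact n.+1) (@Rg_pw n). Qed.

Lemma pw_Rg m h : pw m h -> exists n, Rg n h.
Proof.
move=> /pwS; elim: m h => [|m IH] h; first by exists 0%N.
move=> pmh; have [Bh|nBh] := pselect (Bo m h).
  by apply: IH; exact: Bo_pw.
by exists m.+1.
Qed.

Lemma Rg_Bo n m r : Rg n r -> Bo m r -> (n <= m)%N.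
Proof.
case: n => [|n] //= [_ nB] Bm; rewrite ltnNge; apply/negP => mn.
exact: nB (Bo_le mn Bm).
Qed.

Definition grel g h := exists n, pw n (mul (inv g) h).

Lemma grel_refl g : grel g g.
Proof. by exists 0%N; rewrite /= mulVg. Qed.
Lemma grel_sym g h : grel g h -> grel h g.
Proof. by case=> n pn; exists n; have := pw_inv pn; rewrite invM invK. Qed.
Lemma grel_trans g h k : grel g h -> grel h k -> grel g k.
Proof.
case=> m pm [n pn]; exists (m + n)%N; have := pw_mul pm pn.
by rewrite -mulA mulKVg.
Qed.

Definition rep g := xget e [set h | grel g h].

Lemma rep_rel g : grel g (rep g).
Proof. by apply: xgetPex; exists g; exact: grel_refl. Qed.

Lemma rep_eq g h : grel g h -> rep g = rep h.
Proof.
move=> gh; rewrite /rep; congr xget; apply/funext => k; apply/propext; split.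
  by move=> gk; apply: grel_trans (grel_sym gh) gk.
by move=> hk; apply: grel_trans gh hk.
Qed.

Lemma rep_rep g : rep (rep g) = rep g.
Proof. by apply/esym/rep_eq; exact: rep_rel. Qed.

Definition Lf := [set L : set G | exists c n, rep c = c /\ L = mul c @` Rg n].

Lemma Lf_compact L : Lf L -> compact L /\ closed L.
Proof.
move=> [c [n [_ ->]]]; suff cL : compact (mul c @` Rg n) by split => //; exact: compact_closed.
apply: continuous_compact (@Rg_compact n); apply: continuous_subspaceT; exact: mull_cont.
Qed.

Lemma Lf_cover (g : G) : exists2 L, Lf L & L g.
Proof.
have [m pm] := grel_sym (rep_rel g).
have [n Rn] := pw_Rg pm.
exists (mul (rep g) @` Rg n); first by exists (rep g), n; split => //; exact: rep_rep.
by exists (mul (inv (rep g)) g) => //; rewrite mulKVg.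
Qed.

Lemma Lf_lf (g : G) : exists N, nbhs g N /\ finite_set (meets Lf N).
Proof.
set c := rep g; have [m pm] := grel_sym (rep_rel g).
exists (mul (inv c) @^-1` Bo m); split.
  apply: (@mull_cont (inv c) g); apply: open_nbhs_nbhs; split; first exact: Bo_open.
  exact: pw_Bo.
apply: sub_finite_set (finite_image (fun n => mul c @` Rg n) (finite_II m.+1)).
move=> L [[c' [n [rc' ->]]] [z [[r Rr <-] /= Bz]]].
have c'c : c' = c.
  rewrite -rc'; apply: rep_eq.
  apply: (@grel_trans _ (mul c' r)).
    by exists n.+1; rewrite mulKg; exact: Rg_pw.
  apply: (@grel_trans _ c); first by apply: grel_sym; exists m.+1; exact: Bo_pw.
  exact: grel_sym (rep_rel g).
move: Bz; rewrite c'c mulKg => Bz.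
by exists n => //=; rewrite /= ltnS; exact: Rg_Bo Rr Bz.
Qed.

End GCov.

Lemma regG (g : G) (Q : set G) : nbhs g Q -> exists2 B, nbhs g B & closure B `<=` Q.
Proof.
move=> nQ; have [V wV [cV clV]] := LC (I : [set: G] g).
have nV : nbhs g V by move: wV; rewrite withinET.
have := @compact_regular _ g V HG cV nV Q nQ.
by case=> B nB sB; exists B.
Qed.

Definition FG := saturation act F.

Definition goodP (U : set (set X)) (L : set G) (n : set X) (Pi : set (set G)) :=
  [/\ finite_set Pi,
      (forall P, Pi P -> closed P /\ exists2 u, U u & forall z h, n z -> P h -> u (act z h))
    & L `<=` \bigcup_(P in Pi) P].

Lemma tube (U : set (set X)) (L : set G) (x : X) : compact L -> F x ->
  (forall u, U u -> open u) -> FG `<=` \bigcup_(u in U) u ->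
  exists n, [/\ open n, n x & exists Pi, goodP U L n Pi].
Proof.
move=> cL Fx oU cU.
pose Good := [set p : set X * set G | [/\ open p.1, p.1 x, closed p.2 &
   exists2 u, U u & forall z h, p.1 z -> p.2 h -> u (act z h)]].
have Hc : forall g, L g -> exists2 p, Good p & nbhs g (snd p).
  move=> g Lg; have [u Uu uxg] : (\bigcup_(u in U) u) (act x g).
    by apply: cU; exists x, g.
  have : nbhs (act x g) u by apply: open_nbhs_nbhs; split => //; exact: oU.
  move=> /act_near [P [Q [nP nQ HPQ]]].
  have [B nB clB] := regG nQ.
  exists (interior P, closure B).
    split => //=; [exact: open_interior | exact: closed_closure |].
    exists u => // z h Pz Bh; apply: HPQ; [exact: interior_subset | exact: clB].
  by apply: filterS nB; exact: subset_closure.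
have [D0 [fD0 sD0 cD0]] := fsc cL Hc.
pose W := fun z => forall p, D0 p -> p.1 z.
have nW : nbhs x W.
  apply: near_fin => // p /sD0 [op px _ _]; exact: open_nbhs_nbhs.
exists (interior W); split; [exact: open_interior | exact: nW |].
exists (snd @` D0); split.
- exact: finite_image.
- move=> _ [p D0p <-]; have [_ _ clp [u Uu Hu]] := sD0 p D0p; split => //.
  exists u => // z h Wz ph; apply: Hu => //; exact: (interior_subset Wz p D0p).
- by move=> g /cD0 [p D0p pg]; exists p.2 => //; exists p.
Qed.

Lemma img_sub (a : set X) (L : set G) : a `<=` F -> img a L `<=` FG.
Proof. by move=> aF _ [x [g [ax _ ->]]]; exists x, g; split => //; exact: aF. Qed.

Hypothesis PF : paracompact_set F.

Lemma lfc (U : set (set X)) : (forall u, U u -> open u) -> FG `<=` \bigcup_(u in U) u ->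
  exists S : set (set X), [/\ (forall s, S s -> closed s),
    FG `<=` \bigcup_(s in S) s, (forall s, S s -> exists2 u, U u & s `<=` u) &
    (forall y : X, exists w, nbhs y w /\ finite_set (meets S w))].
Proof.
move=> oU cU.
pose NL L := [set n : set X | open n /\ exists Pi, goodP U L n Pi].
have HC : forall L, exists C : set (set X), Lf L ->
   [/\ (forall c, C c -> closed c /\ c `<=` F), F `<=` \bigcup_(c in C) c,
    (forall c, C c -> exists2 n, NL L n & c `<=` n) &
    (forall x, F x -> exists w, nbhs x w /\ finite_set (meets C w))].
  move=> L; have [LfL|nLfL] := pselect (Lf L); last by exists set0.
  have [cL _] := Lf_compact LfL.
  have oN : forall n, NL L n -> open n by move=> n [].
  have cN : F `<=` \bigcup_(n in NL L) n.
    move=> x Fx; have [n [on nx Pi]] := tube cL Fx oU cU.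
    by exists n.
  have [C HC] := pfc HX cF PF oN cN.
  by exists C.
have [Cf HCf] := choice HC.
have HP : forall Lc : set G * set X, exists Pi, Lf Lc.1 -> Cf Lc.1 Lc.2 -> goodP U Lc.1 Lc.2 Pi.
  move=> [L c] /=; have [LfL|] := pselect (Lf L); last by exists set0.
  have [Cc|] := pselect (Cf L c); last by exists set0.
  have [_ _ rC _] := HCf L LfL; have [n [on [Pi [fPi HPi cPi]]] cn] := rC c Cc.
  exists Pi => _ _; split => // P /HPi [clP [u Uu Hu]]; split => //.
  by exists u => // z h cz Ph; apply: Hu => //; exact: cn.
have [Pf HPf] := choice HP.
pose S := [set s | exists L c P, [/\ Lf L, Cf L c, Pf (L, c) P & s = img c (L `&` P)]].
exists S; split.
- move=> _ [L [c [P [LfL Cc PP ->]]]].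
  have [HC1 _ _ _] := HCf L LfL; have [clc cF'] := HC1 c Cc.
  have [_ HP1 _] := HPf (L, c) LfL Cc; have [clP _] := HP1 P PP.
  apply: img_closed => //; apply: closedI => //; exact: (proj2 (Lf_compact LfL)).
- move=> _ [x [g [Fx ->]]]; have [L LfL Lg] := Lf_cover g.
  have [_ HC2 _ _] := HCf L LfL; have [c Cc cx] := HC2 x Fx.
  have [_ _ HP3] := HPf (L, c) LfL Cc; have [P PP Pg] := HP3 g Lg.
  by exists (img c (L `&` P)); [exists L, c, P | exists x, g].
- move=> _ [L [c [P [LfL Cc PP ->]]]].
  have [_ HP1 _] := HPf (L, c) LfL Cc; have [_ [u Uu Hu]] := HP1 P PP.
  by exists u => // _ [x [h [cx [_ Ph] ->]]]; apply: Hu.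
move=> y.
have [W0 [VF [nW0 [Op [oO FO OV]] [K TK [cK clK]]]]] := FP y.
pose Kinv := inv @` K.
have cKinv : compact Kinv.
  by apply: continuous_compact cK; apply: continuous_subspaceT; exact: inv_cont.
have [Phi [fPhi HPhi]] := lfk cKinv (fun k _ => Lf_lf k).
have sPhi := lfk_meets HPhi.
pose K0 := act y @` K `&` F.
have cK0 : compact K0.
  apply: compact_closedI cF; apply: continuous_compact cK.
  by apply: continuous_subspaceT; exact: actl_cont.
have HPs : forall L, exists Ps : set (set X), Lf L -> finite_set Ps /\
    (forall k, K0 k -> exists w, nbhs k w /\ meets (Cf L) w `<=` Ps).
  move=> L; have [LfL|] := pselect (Lf L); last by exists set0.
  have [_ _ _ HC4] := HCf L LfL.
  have [Ps HPs] := lfk cK0 (fun k K0k => HC4 k (proj2 K0k)).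
  by exists Ps.
have [Psf HPsf] := choice HPs.
pose Wf L := [set z | exists w, [/\ open w, w z & meets (Cf L) w `<=` Psf L]].
have oWf : forall L, open (Wf L).
  move=> L; rewrite openE => z [w [ow wz sw]].
  by apply: filterS (open_nbhs_nbhs (conj ow wz)) => z' wz'; exists w.
have K0Wf : forall L, Lf L -> K0 `<=` Wf L.
  move=> L LfL k K0k; have [_ H2] := HPsf L LfL; have [w [nw sw]] := H2 k K0k.
  exists (interior w); split; [exact: open_interior | exact: nw |].
  by apply: subset_trans sw; apply: meetsS; exact: interior_subset.
pose E L := img (F `\` Wf L) Kinv.
have nE : forall L, Lf L -> nbhs y (~` E L).
  move=> L LfL; apply: open_nbhs_nbhs; split.
    apply: closed_openC; apply: img_closed.
    - by move=> z [].
    - by apply: closedI cF _; exact: open_closedC.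
    - exact: compact_closed HG cKinv.
  move=> [x [k' [[Fx nWx] [k Kk <-] yE]]]; apply: nWx; apply: K0Wf LfL _ _.
  by split => //; exists k => //; rewrite yE actVK.
pose W := W0 `&` (fun z => forall L, Phi L -> Lf L -> ~ E L z).
have nW : nbhs y W.
  apply: filterI nW0 _; apply: near_fin => // L PhiL.
  have [LfL|nLfL] := pselect (Lf L); last by apply: filterS filterT.
  by apply: filterS (nE L LfL) => z nEz _.
exists W; split => //.
apply: (@sub_finite_set _ _ (\bigcup_(L in Phi `&` Lf) \bigcup_(c in Psf L `&` Cf L)
   ((fun P => img c (L `&` P)) @` Pf (L, c)))).
  move=> _ [[L [c [P [LfL Cc PP ->]]]] [z [[x [h [cx [Lh Ph] ->]]] [W0z Wz]]]].
  have [HC1 _ _ _] := HCf L LfL; have [_ cF'] := HC1 c Cc.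
  have Kh : K (inv h).
    by apply: TK; exists (act x h); split => //; rewrite actK; apply/OV/FO/cF'.
  have PhiL : Phi L.
    apply: sPhi; split => //; exists h; split => //; exists (inv h) => //; exact: invK.
  exists L => //; exists c; last by exists P.
  split => //; have : ~ E L (act x h) by apply: Wz.
  have [Wx|nWx] := pselect (Wf L x); last first.
    by case; exists x, h; split => //; [split => //; exact: cF' | exists (inv h) => //; exact: invK].
  move=> _; have [w [ow wx sw]] := Wx; apply: sw; split => //; exists x; split => //.
apply: bigcup_finite; first exact: finite_setIl.
move=> L [PhiL LfL]; apply: bigcup_finite.
  by have [] := HPsf L LfL; move=> fP _; exact: finite_setIl.
move=> c [_ Cc]; apply: finite_image; by have [] := HPf (L, c) LfL Cc.
Qed.


Lemma lf_union_closed (R : set (set X)) : (forall r, R r -> closed r) ->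
  (forall y : X, exists w, nbhs y w /\ finite_set (meets R w)) ->
  closed (\bigcup_(r in R) r).
Proof.
move=> clR lR y cly; apply: contrapT => ny.
have [w [nw fw]] := lR y.
have nW : nbhs y (w `&` (fun z => forall r, meets R w r -> ~ r z)).
  apply: filterI nw _; apply: near_fin => // r [Rr _].
  apply: open_nbhs_nbhs; split; first exact: closed_openC (clR r Rr).
  by move=> ry; apply: ny; exists r.
have [z [[r Rr rz] [wz Hz]]] := cly _ nW.
by apply: (Hz r) => //; split => //; exists z.
Qed.

Lemma main_res : closed FG /\ paracompact_set FG.
Proof.
have satE : FG = img F setT.
  apply/funext => y; apply/propext; split.
  - by case=> x [g [Fx ->]]; exists x, g.
  - by case=> x [g [Fx _ ->]]; exists x, g.
split; first by rewrite satE; apply: img_closed => //; exact: closedT.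
move=> U oU cU.
have [SS [clS cS rS lS]] := lfc oU cU.
pose U' := [set o : set X | open o /\ finite_set (meets SS o)].
have oU' : forall o, U' o -> open o by move=> o [].
have cU' : FG `<=` \bigcup_(o in U') o.
  move=> y _; have [w [nw fw]] := lS y; exists (interior w); last exact: nw.
  split; first exact: open_interior.
  by apply: sub_finite_set fw; apply: meetsS; exact: interior_subset.
have [RR [clR cR rR lR]] := lfc oU' cU'.
have fRS : forall r, RR r -> finite_set (meets SS r).
  move=> r Rr; have [ob [oob fob] rob] := rR r Rr.
  by apply: sub_finite_set fob; apply: meetsS.
pose Vs s := ~` (\bigcup_(r in [set r | RR r /\ r `&` s = set0]) r).
have oVs : forall s, open (Vs s).
  move=> s; apply: closed_openC; apply: lf_union_closed.
    by move=> r [Rr _]; exact: clR.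
  move=> y; have [w [nw fw]] := lR y; exists w; split => //.
  by apply: sub_finite_set fw => r [[Rr _] rw].
have HU : forall s, exists u, SS s -> U u /\ s `<=` u.
  move=> s; have [Ss|] := pselect (SS s); last by exists set0.
  by have [u Uu su] := rS s Ss; exists u.
have [uf Huf] := choice HU.
pose f s := FG `&` (Vs s `&` uf s).
exists (f @` SS); split.
- move=> _ [s Ss <-]; exists (Vs s `&` uf s); split => //.
  apply: openI; [exact: oVs | exact: (oU _ (proj1 (Huf s Ss)))].
- move=> y FGy; have [s Ss sy] := cS y FGy.
  exists (f s); first by exists s.
  split => //; split; last exact: (proj2 (Huf s Ss)).
  move=> [r [Rr rs0] ry]; have : (r `&` s) y by [].
  by rewrite rs0.
- move=> _ [s Ss <-]; exists (uf s); split; first exact: (proj1 (Huf s Ss)).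
  by move=> z [_ [_ ?]].
- move=> y FGy; have [w [nw fw]] := lR y.
  exists (interior w); split; [exact: open_interior | exact: nw |].
  apply: (@sub_finite_set _ _ (f @` \bigcup_(r in meets RR w) meets SS r)).
    move=> _ [[s Ss <-] [z [[FGz [Vz uz]] wz]]].
    exists s => //; have [r Rr rz] := cR z FGz.
    exists r; first by split => //; exists z; split => //; exact: interior_subset.
    split => //; apply: contrapT => nrs; apply: Vz; exists r => //; split => //.
    by rewrite -subset0 => a [ra sa]; apply: nrs; exists a.
  apply: finite_image; apply: bigcup_finite => // r [Rr _]; exact: fRS.
Qed.

End Act.

Theorem corollary2p12 (X G : topologicalType)
    (mul : G -> G -> G) (inv : G -> G) (e : G) (act : X -> G -> X)
    (F : set X) :
  topological_group mul inv e ->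
  locally_compact [set: G] -> hausdorff_space G ->
  hausdorff_space X ->
  continuous_right_action mul e act ->
  closed F -> paracompact_set F ->
  F_proper act F ->
  closed (saturation act F) /\ paracompact_set (saturation act F).
Proof.
move=> TG LC HG HX CA cF PF FP.
exact: (main_res TG CA HX HG LC cF FP PF).
Qed.
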